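(* Let $\mathcal{H}$ be a real Hilbert space, let $A\colon \mathcal{H}\rightrightarrows\mathcal{H}$ be maximally monotone, and let $B\colon\mathcal{H}\to\mathcal{H}$ be monotone with $B=\frac{1}{n}\sum_{i=1}^nB_i$ where each $B_i\colon\mathcal{H}\to\mathcal{H}$ is $L$-Lipschitz. Let $x\in(A+B)^{-1}(0)$ and $\lambda \in \left(0,\frac{1}{2L}\right)$. Given $x_0,x_{-1}\in\mathcal{H}$ and indices $i_k\in\{1,\dots,n\}$ (e.g. chosen uniformly at random), let $$x_{k+1} = J_{\lambda A}\bigl( x_k-\lambda B(x_k) - \lambda( B_{i_k}(x_k) - B_{i_k}(x_{k-1})) \bigr)\quad\forall k\in\mathbb{N}.$$ Then there exists $\varepsilon>0$ such that, for all $k\in\mathbb{N}$ (and every realization of the indices), $$\|x_{k+1}-x\|^2+2\lambda\langle B(x_{k+1})-B(x_k),x-x_{k+1}\rangle + \left(\tfrac{1}{2}+\varepsilon\right)\|x_{k+1}-x_k\|^2 \leq \|x_k-x\|^2 + 2\lambda\langle B_{i_k}(x_k)-B_{i_k}(x_{k-1}), x-x_{k}\rangle +\tfrac{1}{2}\|x_{k}-x_{k-1}\|^2.$$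
   Context: $J_{\lambda A}:=(I+\lambda A)^{-1}$ denotes the resolvent of $\lambda A$. *)

(* Defs.v *)
From HB Require Import structures.
From mathcomp Require Import all_boot all_order all_algebra.
From mathcomp Require Import all_classical all_reals.
From mathcomp Require Import topology normedtype.
Set Implicit Arguments. Unset Strict Implicit. Unset Printing Implicit Defensive.
Import Order.TTheory GRing.Theory Num.Theory.
Import numFieldNormedType.Exports.
Local Open Scope ring_scope.

(* A real Hilbert space is modelled as a complete normed space [V] over a
   realType [R] together with a map [ip] that is an inner product inducing
   the norm of [V]. *)
Definition is_inner_product (R : realType) (V : normedModType R)
    (ip : V -> V -> R) : Prop :=
  (forall x y : V, ip x y = ip y x) /\
  (forall (a : R) (x y z : V), ip (a *: x + y) z = a * ip x z + ip y z) /\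
  (forall x : V, ip x x = `|x| ^+ 2).

(* Set-valued operators V ⇉ V are relations: [A x u] means u ∈ A x. *)
Definition monotone_op (R : realType) (V : normedModType R)
    (ip : V -> V -> R) (A : V -> V -> Prop) : Prop :=
  forall x y u v : V, A x u -> A y v -> 0 <= ip (x - y) (u - v).

Definition maximally_monotone (R : realType) (V : normedModType R)
    (ip : V -> V -> R) (A : V -> V -> Prop) : Prop :=
  monotone_op ip A /\
  forall A' : V -> V -> Prop, monotone_op ip A' ->
    (forall x u, A x u -> A' x u) -> forall x u, A' x u -> A x u.

Definition monotone_fun (R : realType) (V : normedModType R)
    (ip : V -> V -> R) (B : V -> V) : Prop :=
  forall x y : V, 0 <= ip (x - y) (B x - B y).

Definition lipschitz_with (R : realType) (V : normedModType R)
    (L : R) (B : V -> V) : Prop :=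
  forall x y : V, `|B x - B y| <= L * `|x - y|.

(* Resolvent J_{lam A} = (I + lam A)^{-1}, as a relation:
   [resolvent lam A z p] means p ∈ (I + lam A)^{-1} z, i.e. z ∈ p + lam A p.
   (For maximally monotone A and lam > 0 it is single-valued.) *)
Definition resolvent (R : realType) (V : normedModType R)
    (lam : R) (A : V -> V -> Prop) (z p : V) : Prop :=
  exists u : V, A p u /\ z = p + lam *: u.

(* Main.v *)
Require Import Defs.
From HB Require Import structures.
From mathcomp Require Import all_boot all_order all_algebra.
From mathcomp Require Import all_classical all_reals.
From mathcomp Require Import topology normedtype.
From mathcomp Require Import lra.
Import Order.TTheory GRing.Theory Num.Theory.
Import numFieldNormedType.Exports.
Local Open Scope ring_scope.

Lemma ip0l {R : realType} {V : normedModType R} {ip : V -> V -> R}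
  (H : is_inner_product ip) z : ip 0 z = 0.
Proof.
case: H => _ [H _]; have := H 1 0 0 z; rewrite scale1r addr0 => E.
rewrite mul1r in E; lra.
Qed.

Lemma ipDl {R : realType} {V : normedModType R} {ip : V -> V -> R}
  (H : is_inner_product ip) x y z : ip (x + y) z = ip x z + ip y z.
Proof. case: (H) => _ [H1 _]; by rewrite -[x]scale1r H1 mul1r scale1r. Qed.

Lemma ipZl {R : realType} {V : normedModType R} {ip : V -> V -> R}
  (H : is_inner_product ip) a x z : ip (a *: x) z = a * ip x z.
Proof. case: (H) => _ [H1 _]; by rewrite -[a *: x]addr0 H1 ip0l // addr0. Qed.

Lemma ipNl {R : realType} {V : normedModType R} {ip : V -> V -> R}
  (H : is_inner_product ip) x z : ip (- x) z = - ip x z.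
Proof. by rewrite -scaleN1r ipZl // mulN1r. Qed.

Lemma ipDr {R : realType} {V : normedModType R} {ip : V -> V -> R}
  (H : is_inner_product ip) x y z : ip z (x + y) = ip z x + ip z y.
Proof. case: (H) => C _; by rewrite !(C z) ipDl. Qed.

Lemma ipZr {R : realType} {V : normedModType R} {ip : V -> V -> R}
  (H : is_inner_product ip) a x z : ip z (a *: x) = a * ip z x.
Proof. case: (H) => C _; by rewrite !(C z) ipZl. Qed.

Lemma ipNr {R : realType} {V : normedModType R} {ip : V -> V -> R}
  (H : is_inner_product ip) x z : ip z (- x) = - ip z x.
Proof. case: (H) => C _; by rewrite !(C z) ipNl. Qed.

Lemma nsq {R : realType} {V : normedModType R} {ip : V -> V -> R}
  (H : is_inner_product ip) x : `|x| ^+ 2 = ip x x.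
Proof. by case: H => _ [_ ->]. Qed.

Lemma cs_bound {R : realType} {V : normedModType R} {ip : V -> V -> R}
  (H : is_inner_product ip) (d w : V) (L Vn : R) : 0 < L ->
  ip d d <= L ^+ 2 * Vn -> 2 * ip d w <= L * (Vn + ip w w).
Proof.
move=> HL H3.
have H4 : 0 <= ip (d - L *: w) (d - L *: w) by rewrite -(nsq H) sqr_ge0.
have HC : forall a b, ip a b = ip b a by case: H.
rewrite !(ipDl H) !(ipDr H) !(ipNl H) !(ipNr H) !(ipZl H) !(ipZr H) (HC w d) in H4.
suff: 0 <= L * (L * (Vn + ip w w) - 2 * ip d w) by rewrite pmulr_rge0 // subr_ge0.
nra.
Qed.

(* xs k stands for x_{k-1}: xs 0 = x_{-1}, xs 1 = x_0, xs (k.+2) = x_{k+1}. *)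
Theorem lemma6p1 (R : realType) (V : completeNormedModType R)
  (ip : V -> V -> R) (Hip : is_inner_product ip)
  (A : V -> V -> Prop) (HA : maximally_monotone ip A)
  (n : nat) (Hn : (0 < n)%N) (Bi : 'I_n -> V -> V) (L : R) (HL : 0 < L)
  (HBi : forall i, lipschitz_with L (Bi i))
  (B : V -> V) (HBdef : forall y, B y = n%:R^-1 *: \sum_(i < n) Bi i y)
  (HBmon : monotone_fun ip B)
  (x : V) (Hx : A x (- B x))
  (lam : R) (Hlam0 : 0 < lam) (Hlam1 : lam < 1 / (2 * L)) :
  exists eps : R, 0 < eps /\
    forall (xs : nat -> V) (idx : nat -> 'I_n),
      (forall k : nat,
          resolvent lam A
            (xs k.+1 - lam *: B (xs k.+1)
               - lam *: (Bi (idx k) (xs k.+1) - Bi (idx k) (xs k)))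
            (xs k.+2)) ->
      forall k : nat,
        `|xs k.+2 - x| ^+ 2
          + 2 * lam * ip (B (xs k.+2) - B (xs k.+1)) (x - xs k.+2)
          + (1 / 2 + eps) * `|xs k.+2 - xs k.+1| ^+ 2
        <= `|xs k.+1 - x| ^+ 2
          + 2 * lam * ip (Bi (idx k) (xs k.+1) - Bi (idx k) (xs k)) (x - xs k.+1)
          + 1 / 2 * `|xs k.+1 - xs k| ^+ 2.
Proof.
have HlL : lam * L < 1 / 2.
  by move: Hlam1; rewrite ltr_pdivlMr ?mulr_gt0 // => ?; lra.
exists (1 / 2 - lam * L); split; first lra.
move=> xs idx Hres k.
have Hm1 := HA.1.
set p := xs k.+2; set y := xs k.+1; set z := xs k.
set i := idx k.
case: (Hres k) => u [Au Heq]; rewrite -/p -/y -/z -/i in Heq.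
have Hu : lam *: u = (y - lam *: B y - lam *: (Bi i y - Bi i z)) - p.
  by rewrite Heq addrAC subrr add0r.
have Hm := Hm1 _ _ _ _ Au Hx; rewrite opprK in Hm.
have H1 : 0 <= ip (p - x) (lam *: u + lam *: B x).
  by rewrite -scalerDr (ipZr Hip); apply: mulr_ge0 => //; apply: ltW.
rewrite Hu in H1.
have H2 : 0 <= ip (p - x) (lam *: (B p - B x)).
  by rewrite (ipZr Hip); apply: mulr_ge0; [apply: ltW|apply: HBmon].
have H3 : `|Bi i y - Bi i z| ^+ 2 <= L ^+ 2 * `|y - z| ^+ 2.
  have := HBi i y z => h.
  have := normr_ge0 (Bi i y - Bi i z); have := normr_ge0 (y - z); nra.
rewrite (nsq Hip (Bi i y - _)) in H3.
have K0 := cs_bound Hip _ (y - p) _ _ HL H3.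
have K : 2 * lam * ip (Bi i y - Bi i z) (y - p) <= lam * L * (`|y - z| ^+ 2 + ip (y - p) (y - p)).
  have := ler_wpM2l (ltW Hlam0) K0; lra.
move: K H1 H2.
have HC : forall a b, ip a b = ip b a by case: Hip.
rewrite !(nsq Hip (_ - x)) !(nsq Hip (p - y)).
set Vn := `|y - z| ^+ 2.
have HV : 0 <= (1/2 - lam * L) * Vn by apply: mulr_ge0; [lra|apply: sqr_ge0].
rewrite ?(ipDl Hip) ?(ipDr Hip) ?(ipNl Hip) ?(ipNr Hip) ?(ipZl Hip) ?(ipZr Hip).
rewrite ?(ipDl Hip) ?(ipDr Hip) ?(ipNl Hip) ?(ipNr Hip) ?(ipZl Hip) ?(ipZr Hip).
set a := Bi i y; set b := Bi i z; set Bp := B p; set By := B y; set Bx := B x.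
rewrite ?(HC x p) ?(HC y p) ?(HC a p) ?(HC b p) ?(HC Bp p) ?(HC By p) ?(HC Bx p) ?(HC y x) ?(HC a x) ?(HC b x) ?(HC Bp x) ?(HC By x) ?(HC Bx x) ?(HC a y) ?(HC b y) ?(HC Bp y) ?(HC By y) ?(HC Bx y) ?(HC b a) ?(HC Bp a) ?(HC By a) ?(HC Bx a) ?(HC Bp b) ?(HC By b) ?(HC Bx b) ?(HC By Bp) ?(HC Bx Bp) ?(HC Bx By).
move=> K H1 H2.
lra.
Qed.
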